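(* Let $H_0\subset H_1$ be dual $t$-motives, $H_0$ a $\bar k[t,\sigma]$-submodule of $H_1$, with $\dim_{\bar k}H_1/H_0<\infty$. Then there exists $0\ne a\in\mathbb F_q[t]$ with $aH_1\subset H_0$.
   Context: $\bar k$ is the algebraic closure of $k=\mathbb F_q(T)$ in $\mathbb C_\infty$; $t$ is a variable. $\bar k[t,\sigma]$ is the ring generated over $\bar k$ by a variable $t$ (central, commuting with $\bar k$ and $\sigma$) and a variable $\sigma$ with $\sigma x=x^{q^{-1}}\sigma$ for $x\in\bar k$. A dual $t$-motive is a left $\bar k[t,\sigma]$-module $H$ that is free of finite rank over $\bar k[t]$, free of finite rank over $\bar k[\sigma]$, and satisfies $(t-T)^nH\subset\sigma H$ for $n\gg0$. *)

(* Defs.v *)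
From HB Require Import structures.
From mathcomp Require Import all_boot all_order all_algebra.
Set Implicit Arguments. Unset Strict Implicit. Unset Printing Implicit Defensive.
Import GRing.Theory.
Local Open Scope ring_scope.

Section DualTMotive.
Variables (K : fieldType) (q : nat).

Definition inFq (x : K) : Prop := x ^+ q = x.

Definition inFqT (T c : K) : Prop :=
  exists g : {poly K}, (forall i, inFq g`_i) /\ c = g.[T].

(* K is (a model of) the algebraic closure of F_q(T):
   algebraically closed (type closedFieldType, given separately),
   T transcendental over F_q, every element algebraic over F_q(T)
   (denominators cleared: root of a nonzero polynomial with
   coefficients in F_q[T]). *)
Definition alg_closure_FqT (T : K) : Prop :=
  (forall g : {poly K}, (forall i, inFq g`_i) -> g != 0 -> g.[T] != 0) /\
  (forall x : K, exists P : {poly K},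
      [/\ P != 0, (forall i, inFqT T P`_i) & root P x]).

Variable H : lmodType K.

(* A left K[t,sigma]-module structure on the K-vector space H:
   tH is the action of t, sH the action of sigma;
   t is K-linear and commutes with sigma,
   sigma is additive and sigma (x h) = x^(1/q) sigma h, i.e.
   sigma (a^q h) = a sigma h. *)
Definition ktsigma_module (tH sH : H -> H) : Prop :=
  [/\ forall u v, tH (u + v) = tH u + tH v,
      forall (a : K) u, tH (a *: u) = a *: tH u,
      forall u v, sH (u + v) = sH u + sH v,
      forall (a : K) u, sH (a ^+ q *: u) = a *: sH u
    & forall u, tH (sH u) = sH (tH u)].

Definition tact (tH : H -> H) (f : {poly K}) (h : H) : H :=
  \sum_(i < size f) f`_i *: iter i tH h.

(* action of the skew polynomial sum_i f_i sigma^i (coefficients on the left);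
   a {poly K} is used only as the list of coefficients *)
Definition sact (sH : H -> H) (f : {poly K}) (h : H) : H :=
  \sum_(i < size f) f`_i *: iter i sH h.

Definition free_fin_rank (act : {poly K} -> H -> H) : Prop :=
  exists (r : nat) (b : 'I_r -> H), forall h : H,
    exists! f : {ffun 'I_r -> {poly K}}, h = \sum_(i < r) act (f i) (b i).

Definition dual_t_motive (T : K) (tH sH : H -> H) : Prop :=
  [/\ ktsigma_module tH sH,
      free_fin_rank (tact tH),
      free_fin_rank (sact sH)
    & exists n0 : nat, forall n, (n0 <= n)%N -> forall h : H,
        exists h' : H, iter n (fun u => tH u - T *: u) h = sH h'].

End DualTMotive.

(* iota : H0 -> H1 is an injective K[t,sigma]-linear map, i.e. H0 is
   (identified with) a K[t,sigma]-submodule of H1 *)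
Definition ktsigma_embedding (K : fieldType) (H0 H1 : lmodType K)
    (t0 s0 : H0 -> H0) (t1 s1 : H1 -> H1) (iota : H0 -> H1) : Prop :=
  [/\ injective iota,
      forall u v, iota (u + v) = iota u + iota v,
      forall (a : K) u, iota (a *: u) = a *: iota u,
      forall u, iota (t0 u) = t1 (iota u)
    & forall u, iota (s0 u) = s1 (iota u)].

(* dim_K (H1 / iota H0) < infinity *)
Definition fin_codim (K : fieldType) (H0 H1 : lmodType K) (iota : H0 -> H1) : Prop :=
  exists (m : nat) (v : 'I_m -> H1), forall h : H1,
    exists (c : 'I_m -> K) (h0 : H0), h = \sum_(i < m) c i *: v i + iota h0.

(* Main.v *)
Require Import Defs.
From HB Require Import structures.
From mathcomp Require Import all_boot all_order all_algebra.
From Stdlib Require Import Classical.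
Import GRing.Theory.
Local Open Scope ring_scope.

Module Helpers.
Set Implicit Arguments. Unset Strict Implicit. Unset Printing Implicit Defensive.

Section Frob.
Variables (K : fieldType) (q : nat) (Hq : [pchar K].-nat q).
Definition frobq (_ : [pchar K].-nat q) (x : K) := x ^+ q.
Arguments frobq : clear implicits.
Lemma frobq_nmod : nmod_morphism (frobq Hq).
Proof. split; first by rewrite /frobq expr0n; move: Hq; rewrite /pnat; case: q.

move=> x y; exact: exprDn_pchar. Qed.
Lemma frobq_monoid : monoid_morphism (frobq Hq).
Proof. split; first by rewrite /frobq expr1n. by move=> x y; rewrite /frobq exprMn. Qed.
HB.instance Definition _ := GRing.isNmodMorphism.Build K K (frobq Hq) frobq_nmod.
HB.instance Definition _ := GRing.isMonoidMorphism.Build K K (frobq Hq) frobq_monoid.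

End Frob.
Lemma pnat_q p e (K : fieldType) : p \in [pchar K] -> [pchar K].-nat (p ^ e)%N.
Proof. move=> hp. rewrite pnatX (eq_pnat _ (pcharf_eq hp)) pnat_id ?(pcharf_prime hp) //. Qed.


Section Gact.
Variables (K : fieldType) (H : lmodType K).
Implicit Types (f g : {poly K}) (h u v : H) (c : K).
Definition gact (A : H -> H) (f : {poly K}) (h : H) : H :=
  \sum_(i < size f) f`_i *: iter i A h.

Lemma gact_widen (A : H -> H) n f h : (size f <= n)%N ->
  gact A f h = \sum_(i < n) f`_i *: iter i A h.
Proof.
move=> hn; rewrite /gact (big_ord_widen n (fun i => f`_i *: iter i A h)) //.
rewrite big_mkcond; apply: eq_bigr => i _; case: ifP => // /negbT.
by rewrite -leqNgt => hi; rewrite nth_default ?scale0r.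
Qed.

Lemma gactD (A : H -> H) f g h : gact A (f + g) h = gact A f h + gact A g h.
Proof.
rewrite !(@gact_widen A (maxn (size f) (size g))) ?leq_maxl ?leq_maxr //;
  last by rewrite (leq_trans (size_polyD _ _)).
by rewrite -big_split; apply: eq_bigr => i _; rewrite coefD scalerDl.
Qed.

Lemma gactZ (A : H -> H) c f h : gact A (c *: f) h = c *: gact A f h.
Proof.
rewrite !(@gact_widen A (size f)) ?size_scale_leq // scaler_sumr.
by apply: eq_bigr => i _; rewrite coefZ scalerA.
Qed.

Lemma gactN (A : H -> H) f h : gact A (- f) h = - gact A f h.
Proof. by rewrite -(scaleN1r f) gactZ scaleN1r. Qed.

Lemma gactB (A : H -> H) f g h : gact A (f - g) h = gact A f h - gact A g h.
Proof. by rewrite gactD gactN. Qed.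

Lemma gactC (A : H -> H) c h : gact A c%:P h = c *: h.
Proof. by rewrite (@gact_widen A 1) ?size_polyC ?leq_b1 // big_ord1 coefC. Qed.

Lemma gact0 A h : gact A 0 h = 0.
Proof. by rewrite /gact size_poly0 big_ord0. Qed.

Lemma gactXM (A : H -> H) f h : gact A ('X * f) h = gact A f (A h).
Proof.
rewrite (@gact_widen A (size f).+1); last first.
  by rewrite mulrC (leq_trans (size_mul_leq _ _)) // size_polyX addn2.
rewrite big_ord_recl coefXM eqxx scale0r add0r /gact.
by apply: eq_bigr => i _; rewrite coefXM /= -iterSr.
Qed.

Variable (A : H -> H).
Hypotheses (AD : forall u v, A (u + v) = A u + A v)
           (AZ : forall (c : K) u, A (c *: u) = c *: A u).

Lemma A0 : A 0 = 0.
Proof. by have := AZ 0 0; rewrite !scale0r. Qed.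

Lemma iterAD i u v : iter i A (u + v) = iter i A u + iter i A v.
Proof. by elim: i => //= i ->; rewrite AD. Qed.
Lemma iterAZ i c u : iter i A (c *: u) = c *: iter i A u.
Proof. by elim: i => //= i ->; rewrite AZ. Qed.

Lemma gact_addr f u v : gact A f (u + v) = gact A f u + gact A f v.
Proof. by rewrite /gact -big_split; apply: eq_bigr => i _; rewrite iterAD scalerDr. Qed.
Lemma gact_scaler f c u : gact A f (c *: u) = c *: gact A f u.
Proof.
by rewrite /gact scaler_sumr; apply: eq_bigr => i _; rewrite iterAZ !scalerA mulrC.
Qed.

Lemma gact_oppr f u : gact A f (- u) = - gact A f u.
Proof. by rewrite -(scaleN1r u) gact_scaler scaleN1r. Qed.
Lemma gact_subr f u v : gact A f (u - v) = gact A f u - gact A f v.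
Proof. by rewrite gact_addr gact_oppr. Qed.

Lemma gactA f h : gact A f (A h) = A (gact A f h).
Proof.
rewrite /gact (big_morph A AD A0); apply: eq_bigr => i _.
by rewrite AZ -iterSr.
Qed.

Lemma gactM f g h : gact A (f * g) h = gact A f (gact A g h).
Proof.
elim/poly_ind: f g h => [|f c IH] g h; first by rewrite mul0r !gact0.
rewrite mulrDl -mulrA mul_polyC gactD gactZ IH gactXM.
by rewrite gactD gactC mulrC gactXM gactA.
Qed.

Lemma gact_XsubC c n h :
  gact A (('X - c%:P) ^+ n) h = iter n (fun u => A u - c *: u) h.
Proof.
elim: n => [|n IH]; first by rewrite expr0 gactC scale1r.
rewrite exprS gactM IH /= gactB gactC -['X]mulr1 gactXM gactC scale1r //.
Qed.
End Gact.

Section GactMorph.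
Variables (K : fieldType) (H H' : lmodType K) (A : H -> H) (A' : H' -> H') (B : H -> H').
Implicit Types (f : {poly K}) (h u : H).
Hypotheses (BD : forall u v, B (u + v) = B u + B v)
           (BZ : forall (c : K) u, B (c *: u) = c *: B u)
           (BA : forall u, B (A u) = A' (B u)).
Lemma B0 : B 0 = 0.
Proof. by have := BZ 0 0; rewrite !scale0r. Qed.
Lemma iter_morph i u : B (iter i A u) = iter i A' (B u).
Proof. by elim: i => //= i <-; rewrite BA. Qed.
Lemma gact_morph f h : B (gact A f h) = gact A' f (B h).
Proof.
rewrite /gact (big_morph B BD B0); apply: eq_bigr => i _.
by rewrite BZ iter_morph.
Qed.
End GactMorph.

Section GactFrob.
Variables (K : fieldType) (F : {rmorphism K -> K}) (H : lmodType K) (A S : H -> H).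
Implicit Types (f : {poly K}) (h u : H).
Hypotheses (SD : forall u v, S (u + v) = S u + S v)
           (SZ : forall (c : K) u, S (F c *: u) = c *: S u)
           (AS : forall u, A (S u) = S (A u)).
Lemma S0 : S 0 = 0.
Proof. by have := SD 0 0; rewrite addr0 => /eqP; rewrite -subr_eq subrr eq_sym => /eqP. Qed.
Lemma iterS_comm i u : iter i A (S u) = S (iter i A u).
Proof. by elim: i => //= i ->; rewrite AS. Qed.
Lemma gact_frob f h : gact A f (S h) = S (gact A (map_poly F f) h).
Proof.
rewrite /gact size_map_inj_poly ?(big_morph S SD S0); last 2 first.
- exact: fmorph_inj.
- by rewrite rmorph0.
by apply: eq_bigr => i _; rewrite coef_map SZ iterS_comm.
Qed.
End GactFrob.


Section Main.
Variables (K : closedFieldType) (H0 H1 : lmodType K) (t0 : H0 -> H0)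
  (t1 : H1 -> H1) (iota : H0 -> H1).
Hypotheses (t0D : forall u v, t0 (u + v) = t0 u + t0 v)
           (t0Z : forall (c : K) u, t0 (c *: u) = c *: t0 u)
           (t1D : forall u v, t1 (u + v) = t1 u + t1 v)
           (t1Z : forall (c : K) u, t1 (c *: u) = c *: t1 u)
           (iD : forall u v, iota (u + v) = iota u + iota v)
           (iZ : forall (c : K) u, iota (c *: u) = c *: iota u)
           (it : forall u, iota (t0 u) = t1 (iota u)).

Definition inH0 (x : H1) := exists y, x = iota y.
Definition kills (f : {poly K}) := forall h, inH0 (gact t1 f h).

Lemma inH0_0 : inH0 0.
Proof. by exists 0; rewrite (B0 iZ). Qed.
Lemma inH0D x y : inH0 x -> inH0 y -> inH0 (x + y).
Proof. by move=> [a ->] [b ->]; exists (a + b); rewrite iD. Qed.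
Lemma inH0Z c x : inH0 x -> inH0 (c *: x).
Proof. by move=> [a ->]; exists (c *: a); rewrite iZ. Qed.
Lemma inH0N x : inH0 x -> inH0 (- x).
Proof. by move=> /(inH0Z (-1)); rewrite scaleN1r. Qed.
Lemma inH0B x y : inH0 x -> inH0 y -> inH0 (x - y).
Proof. by move=> hx hy; apply: inH0D => //; apply: inH0N. Qed.
Lemma inH0_gact f x : inH0 x -> inH0 (gact t1 f x).
Proof. by move=> [a ->]; exists (gact t0 f a); rewrite (gact_morph iD iZ it). Qed.
Lemma inH0_sum (I : finType) (F : I -> H1) : (forall i, inH0 (F i)) -> inH0 (\sum_i F i).
Proof.
move=> hF; apply: (big_ind inH0) => //; [exact: inH0_0 | exact: inH0D].
Qed.

Lemma kills_mul f g : kills g -> kills (f * g).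
Proof. by move=> hg h; rewrite (gactM t1D t1Z); apply: inH0_gact. Qed.
Lemma kills_mod f g : kills f -> kills g -> kills (f %% g).
Proof.
move=> hf hg h; have -> : f %% g = f - (f %/ g) * g by rewrite {2}(divp_eq f g) addrC addKr.
by rewrite gactB; apply: inH0B => //; apply: kills_mul.
Qed.
Lemma kills_scale c f : kills f -> kills (c *: f).
Proof. by move=> hf h; rewrite gactZ; apply: inH0Z. Qed.

Lemma killer_mx N (w : 'I_N.+1 -> H1) :
  (forall h, exists c : 'I_N.+1 -> K, inH0 (h - \sum_i c i *: w i)) ->
  exists f, f != 0 /\ kills f.
Proof.
move=> hspan.
have [A hA] : exists A : 'I_N.+1 -> 'I_N.+1 -> K,
    forall i, inH0 (t1 (w i) - \sum_j A i j *: w j).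
  have [A hA] := fin_all_exists (fun i => hspan (t1 (w i))).
  by exists (fun i j => A i j).
pose M : 'M[K]_N.+1 := \matrix_(i, j) A i j.
pose phi (c : 'rV[K]_N.+1) := \sum_j c 0 j *: w j.
have phiD c d : phi (c + d) = phi c + phi d.
  by rewrite /phi -big_split; apply: eq_bigr => j _; rewrite mxE scalerDl.
have phiZ a c : phi (a *: c) = a *: phi c.
  by rewrite /phi scaler_sumr; apply: eq_bigr => j _; rewrite mxE scalerA.
have phiB c d : phi (c - d) = phi c - phi d.
  by rewrite phiD -(scaleN1r d) phiZ scaleN1r.
have phi0 : phi 0 = 0 by rewrite -(scale0r 0) phiZ scale0r.
have tphi c : inH0 (t1 (phi c) - phi (c *m M)).
  have -> : t1 (phi c) - phi (c *m M) = \sum_k c 0 k *: (t1 (w k) - \sum_j A k j *: w j).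
    rewrite /phi (big_morph t1 t1D (A0 t1Z)) [RHS](eq_bigr _ (fun k _ => scalerBr _ _ _)) sumrB; congr (_ - _).
      by apply: eq_bigr => k _; rewrite t1Z.
    rewrite (eq_bigr (fun j => \sum_k (c 0 k * A k j) *: w j)); last first.
      by move=> j _; rewrite !mxE scaler_suml; apply: eq_bigr => k _; rewrite mxE.
    rewrite exchange_big /=; apply: eq_bigr => k _.
    by rewrite scaler_sumr; apply: eq_bigr => j _; rewrite scalerA.
  by apply: inH0_sum => k; apply: inH0Z.
have key p : forall c, inH0 (gact t1 p (phi c) - phi (c *m horner_mx M p)).
  elim/poly_ind: p => [|p d IH] c.
    by rewrite gact0 rmorph0 mulmx0 phi0 subrr; exact: inH0_0.
  rewrite gactD gactC mulrC (gactXM t1) rmorphD rmorphM /= horner_mx_X horner_mx_C.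
  rewrite mulmxDr mul_mx_scalar phiD phiZ -mulmxE mulmxA.
  have -> : gact t1 p (t1 (phi c)) + d *: phi c - (phi (c *m M *m horner_mx M p) + d *: phi c)
     = (gact t1 p (phi (c *m M)) - phi (c *m M *m horner_mx M p))
       + gact t1 p (t1 (phi c) - phi (c *m M)).
    rewrite (gact_subr t1D t1Z).
    set a := gact t1 p (t1 _); set b := phi _; set e := d *: _; set g := gact t1 p _.
    by rewrite opprD addrACA subrr addr0 [RHS]addrC addrA addrNK.
  by apply: inH0D; [apply: IH | apply: inH0_gact].
exists (char_poly M); split.
  by apply/eqP => h0; have := char_poly_monic M; rewrite h0 monicE lead_coef0 eq_sym oner_eq0.
move=> h; have [c hc] := hspan h.
pose cr : 'rV[K]_N.+1 := \row_j c j.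
have := key (char_poly M) cr; rewrite Cayley_Hamilton mulmx0 phi0 subr0 => hk.
have -> : gact t1 (char_poly M) h = gact t1 (char_poly M) (h - phi cr) + gact t1 (char_poly M) (phi cr).
  by rewrite -(gact_addr t1D) subrK.
apply: inH0D => //; apply: inH0_gact.
suff -> : phi cr = \sum_i c i *: w i by [].
by apply: eq_bigr => j _; rewrite mxE.
Qed.

Lemma killer_exists m (v : 'I_m -> H1) :
  (forall h, exists (c : 'I_m -> K) (h0 : H0), h = \sum_(i < m) c i *: v i + iota h0) ->
  exists f, f != 0 /\ kills f.
Proof.
move=> hv; pose w (i : 'I_m.+1) := oapp v 0 (insub (val i) : option 'I_m).
apply: (@killer_mx m w) => h; have [c [h0 ->]] := hv h.
exists (fun i : 'I_m.+1 => oapp c 0 (insub (val i) : option 'I_m)).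
have hw (i : 'I_m) : (insub (val (widen_ord (leqnSn m) i)) : option 'I_m) = Some i.
  exact: valK.
rewrite big_ord_recr /= insubF ?ltnn //= scale0r addr0.
rewrite [X in _ - X](eq_bigr (fun i => c i *: v i)); last first.
  by move=> i _; rewrite /w /= valK.
by rewrite addrC addKr; exists h0.
Qed.

Lemma min_killer : (exists f, f != 0 /\ kills f) ->
  exists mu, [/\ mu \is monic, kills mu & forall r, kills r -> mu %| r].
Proof.
move=> [f [f0 kf]].
suff [mu [mu0 kmu mmin]] : exists mu, [/\ mu != 0, kills mu &
    forall r, kills r -> (size r < size mu)%N -> r = 0].
  pose mu' := (lead_coef mu)^-1 *: mu.
  have l0 : lead_coef mu != 0 by rewrite lead_coef_eq0.
  have smu' : size mu' = size mu by rewrite size_scale // invr_eq0.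
  exists mu'; split.
  - by rewrite monicE lead_coefZ mulVf.
  - exact: kills_scale.
  move=> r kr; apply/modp_eq0P; apply: mmin; first exact: kills_mod (kills_scale _ kmu).
  by rewrite -smu' ltn_modp -size_poly_eq0 smu' size_poly_eq0.
move: {2}(size f) (leqnn (size f)) => N; elim: N f f0 kf => [|N IH] f f0 kf hN.
  by move: f0; rewrite -size_poly_eq0 -leqn0 hN.
case: (classic (exists r, [/\ kills r, (size r < size f)%N & r != 0])).
  move=> [r [kr sr r0]]; apply: (IH r r0 kr); rewrite -ltnS; exact: leq_trans sr hN.
move=> nex; exists f; split => // r kr sr; apply/eqP; apply: contraT => r0.
by case: nex; exists r.
Qed.

Variables (q : nat) (Hq : [pchar K].-nat q) (s0 : H0 -> H0) (s1 : H1 -> H1).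
Local Notation F := (frobq Hq).
Hypotheses (s1D : forall u v, s1 (u + v) = s1 u + s1 v)
           (s1Z : forall (a : K) u, s1 (a ^+ q *: u) = a *: s1 u)
           (ts1 : forall u, t1 (s1 u) = s1 (t1 u))
           (i_s : forall u, iota (s0 u) = s1 (iota u))
           (s1inj : forall x, s1 x = 0 -> x = 0).
Variables (T : K) (n : nat).
Hypotheses (hn1 : forall h, exists h', iter n (fun u => t1 u - T *: u) h = s1 h')
           (hn0 : forall h, exists h', iter n (fun u => t0 u - T *: u) h = s0 h')
           (HT : forall m, (0 < m)%N -> iter m F T != T).

Lemma qpos : (0 < q)%N.
Proof. by move: Hq; rewrite /pnat; case: q. Qed.

Lemma frob_surj (a : K) : exists r, F r = a.
Proof.
have [x hx] := @solve_monicpoly K q (fun i => if i == 0%N then a else 0) qpos.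
exists x; rewrite /= /frobq hx.
case: q qpos => // k _; rewrite big_ord_recl /= expr0 mulr1 big1 ?addr0 // => i _.
by rewrite mul0r.
Qed.

Lemma frob_surj_poly (g : {poly K}) : exists nu, map_poly F nu = g.
Proof.
have fs a : exists r, F r == a by have [r hr] := frob_surj a; exists r; apply/eqP.
pose r a := xchoose (fs a).
exists (\poly_(j < size g) r g`_j); apply/polyP => j.
rewrite coef_map coef_poly; case: ifP => hj; first exact/eqP/(xchooseP (fs _)).
by rewrite raddf0 nth_default // leqNgt hj.
Qed.

Lemma s1Z' (a : K) u : s1 (F a *: u) = a *: s1 u.
Proof. exact: s1Z. Qed.

Lemma s1N u : s1 (- u) = - s1 u.
Proof.
apply/eqP; rewrite -subr_eq0 opprK -s1D addNr; apply/eqP; exact: (S0 s1D).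
Qed.

Section Mu.
Variable mu : {poly K}.
Hypotheses (mu_monic : mu \is monic) (mu_kills : kills mu)
           (mu_min : forall r, kills r -> mu %| r).

Lemma step1 nu : map_poly F nu = mu -> mu %| nu * ('X - T%:P) ^+ n.
Proof.
move=> hnu; apply: mu_min => h.
rewrite (gactM t1D t1Z) (gact_XsubC t1D t1Z).
have [h' ->] := hn1 h.
rewrite (gact_frob s1D s1Z' ts1) hnu.
have [y ->] := mu_kills h'.
by exists (s0 y); rewrite i_s.
Qed.

Lemma step2 : mu %| map_poly F mu * ('X - (F T)%:P) ^+ n.
Proof.
have -> : map_poly F mu * ('X - (F T)%:P) ^+ n = map_poly F (('X - T%:P) ^+ n * mu).
  rewrite rmorphM mulrC; congr (_ * _); rewrite (rmorphXn (map_poly F)) /=; congr (_ ^+ _). by rewrite map_polyXsubC.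
apply: mu_min => h.
have [y hy] := mu_kills (s1 h).
have : s1 (gact t1 (map_poly F (('X - T%:P) ^+ n * mu)) h) =
       gact t1 (('X - T%:P) ^+ n) (iota y).
  by rewrite -(gact_frob s1D s1Z' ts1) (gactM t1D t1Z) hy.
have hBA u : iota (t0 u - T *: u) = t1 (iota u) - T *: iota u.
  by rewrite iD -scaleN1r iZ it iZ scaleN1r.
rewrite (gact_XsubC t1D t1Z) -(iter_morph hBA).
have [y' ->] := hn0 y; rewrite i_s => e.
exists y'; apply/eqP; rewrite -subr_eq0; apply/eqP; apply: s1inj.
by rewrite s1D s1N e subrr.
Qed.

Lemma roots_step a : root mu a -> a != T -> root mu (F a).
Proof.
move=> ra naT; have [nu hnu] := frob_surj_poly mu.
have := root_dvdp (step1 hnu) ra.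
rewrite rootE hornerM horner_exp hornerXsubC mulf_eq0 expf_eq0 subr_eq0 (negbTE naT) andbF orbF.
by move=> /eqP r0; rewrite -hnu rootE horner_map /= r0 rmorph0.
Qed.

Lemma iter_inj k x y : iter k F x = iter k F y -> x = y.
Proof. by elim: k => //= k IH /fmorph_inj /IH. Qed.

Lemma not_root_FT : ~~ root mu (F T).
Proof.
apply/negP => r1.
have hr k : root mu (iter k.+1 F T).
  elim: k => // k IH; rewrite iterS; apply: roots_step => //; exact: HT.
have mu0 : mu != 0 by apply: monic_neq0.
suff: (size (mkseq (fun k => iter k.+1 F T) (size mu)) < size mu)%N by rewrite size_mkseq ltnn.
apply: max_poly_roots mu0 _ _.
  by apply/allP => x /mapP [k _ ->].
apply: mkseq_uniq => i j.
wlog lij : i j / (i <= j)%N.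
  by move=> W; case/orP: (leq_total i j) => /W // + e; move=> /(_ (esym e)).
rewrite -(subnKC lij) -addSn iterD => e.
have e' := iter_inj e.
case: (posnP (j - i)) => [->|p] //; first by rewrite addn0.
by move: (HT p); rewrite -e' eqxx.
Qed.

Lemma mu_fixed : map_poly F mu = mu.
Proof.
have d : mu %| map_poly F mu.
  have cop : coprimep mu (('X - (F T)%:P) ^+ n).
    by apply: coprimep_expr; rewrite coprimep_XsubC not_root_FT.
  by rewrite -(Gauss_dvdpl _ cop) step2.
have : mu %= map_poly F mu.
  rewrite -dvdp_size_eqp // size_map_inj_poly ?eqxx ?raddf0 //; exact: fmorph_inj.
by rewrite eqp_monic // ?map_monic // => /eqP <-.
Qed.
End Mu.

End Main.


Lemma s_inj (K : closedFieldType) (q : nat) (Hq : [pchar K].-nat q) (H : lmodType K)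
  (s : H -> H) (sD : forall u v, s (u + v) = s u + s v)
  (sZ : forall (a : K) u, s (a ^+ q *: u) = a *: s u)
  (fr : free_fin_rank (sact s)) : forall x, s x = 0 -> x = 0.
Proof.
have eqsa f h : sact s f h = gact s f h by [].
have sZ' (a : K) u : s (frobq Hq a *: u) = a *: s u by exact: sZ.
move=> x sx0; case: fr => r [b hb].
have [f [hf _]] := hb x.
have [nu hnu] := fin_all_exists (fun i => frob_surj_poly Hq (f i)).
have e1 : s x = \sum_i sact s ([ffun i => 'X * nu i] i) (b i).
  rewrite hf (big_morph s sD (S0 sD)); apply: eq_bigr => i _.
  by rewrite ffunE !eqsa -hnu -(gact_frob sD sZ' (fun u => erefl)) gactXM.
have e2 : s x = \sum_i sact s ([ffun i : 'I_r => (0 : {poly K})] i) (b i).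
  by rewrite sx0 big1 // => i _; rewrite ffunE eqsa gact0.
have [g [_ ug]] := hb (s x).
have E := etrans (esym (ug _ e1)) (ug _ e2).
have f0 i : f i = 0.
  have := congr1 (fun F : {ffun 'I_r -> {poly K}} => F i) E; rewrite !ffunE => /eqP.
  rewrite mulf_eq0 polyX_eq0 /= => /eqP nu0.
  by rewrite -hnu nu0 raddf0.
by rewrite hf big1 // => i _; rewrite f0 eqsa gact0.
Qed.

Lemma HT_of (K : fieldType) (q : nat) (Hq : [pchar K].-nat q) (q1 : (1 < q)%N) (T : K)
  (HK : forall g : {poly K}, (forall i, inFq q g`_i) -> g != 0 -> g.[T] != 0) :
  forall m, (0 < m)%N -> iter m (frobq Hq) T != T.
Proof.
move=> m m0.
have ei : iter m (frobq Hq) T = T ^+ (q ^ m).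
  by elim: (m) => [|k IH] /=; rewrite ?expr1 // IH /frobq -exprM expnSr.
have qm1 : (q ^ m != 1)%N.
  by rewrite -(expn0 q) (inj_eq (expnI q1)) -lt0n.
have := HK ('X^(q ^ m) - 'X).
rewrite ei !hornerE => HH; rewrite -subr_eq0; apply: HH.
  move=> i; rewrite /inFq coefB coefXn coefX.
  by have := rmorphB (frobq Hq) (i == (q ^ m)%N)%:R (i == 1)%N%:R; rewrite !rmorph_nat.
apply/eqP => h; have := congr1 (fun p : {poly K} => p`_(q ^ m)) h.
by rewrite coefB coefXn coefX eqxx (negbTE qm1) subr0 coef0 => /eqP; rewrite oner_eq0.
Qed.

End Helpers.
Import Helpers.


Theorem theorem4 (p e q : nat) (Hp : prime p) (He : (0 < e)%N) (Hq : q = (p ^ e)%N)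
  (K : closedFieldType) (HpK : p \in [pchar K]) (T : K)
  (HK : alg_closure_FqT q T)
  (H0 H1 : lmodType K) (t0 s0 : H0 -> H0) (t1 s1 : H1 -> H1) (iota : H0 -> H1)
  (HM0 : dual_t_motive q T t0 s0) (HM1 : dual_t_motive q T t1 s1)
  (Hsub : ktsigma_embedding t0 s0 t1 s1 iota)
  (Hfin : fin_codim iota) :
  exists a : {poly K},
    [/\ a != 0, (forall i, inFq q a`_i)
      & forall h : H1, exists h0 : H0, tact t1 a h = iota h0].
Proof.
have Hqn : [pchar K].-nat q by rewrite Hq; exact: pnat_q.
have q1 : (1 < q)%N by rewrite Hq -(expn0 p) ltn_exp2l ?prime_gt1.
case: HM0 => [[t0D t0Z s0D s0Z ts0] _ _ [n0 hn0]].
case: HM1 => [[t1D t1Z s1D s1Z ts1] _ fr1 [n1 hn1]].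
case: Hsub => [_ iD iZ it i_s].
case: Hfin => [m [v hv]].
have s1inj := s_inj Hqn s1D s1Z fr1.
have HT := HT_of Hqn q1 HK.1.
pose n := maxn n0 n1.
have hn1' : forall h, exists h', iter n (fun u => t1 u - T *: u) h = s1 h'.
  by apply: hn1; rewrite leq_maxr.
have hn0' : forall h, exists h', iter n (fun u => t0 u - T *: u) h = s0 h'.
  by apply: hn0; rewrite leq_maxl.
have [mu [mum kmu mmin]] := min_killer t1D t1Z iD iZ it (killer_exists t1D t1Z iD iZ it hv).
have mufix := mu_fixed t1D t1Z iD iZ it s1D s1Z ts1 i_s s1inj hn1' hn0' HT mum kmu mmin.
exists mu; split.
- exact: monic_neq0.
- by move=> i; rewrite /inFq; have := congr1 (fun r : {poly K} => r`_i) mufix; rewrite coef_map.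
- by move=> h; have [y hy] := kmu h; exists y.
Qed.
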